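(* Let $(X,\rho)$ be a metric continuum that is hereditarily indecomposable, and suppose $\{(A_0,B_0),(A_1,B_1)\}$ is an essential family of pairs of disjoint closed subsets of $X$ such that $\rho(x,y)>1$ whenever $x\in A_i$ and $y\in B_i$ ($i=0,1$). Let $\mathcal N$ be a finite collection of pairwise disjoint closed subsets of $X$, each of diameter at most $\tfrac12$. Then there is a continuum in $X$ of diameter at least $1$ that is disjoint from every element of $\mathcal N$.
   Context: A continuum is a compact connected metrizable space; it is hereditarily indecomposable if whenever two subcontinua meet, one contains the other. For disjoint closed $A,B\subseteq X$, a closed set $L$ is a partition between $A$ and $B$ if $X\setminus L=U\cup V$ with $U,V$ disjoint open, $A\subseteq U$, $B\subseteq V$. A family $\{(A_i,B_i)\}$ of pairs of disjoint closed sets is essential if for any choice of partitions $L_i$ between $A_i$ and $B_i$ one has $\bigcap_i L_i\neq\emptyset$. *)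

(* Defs.v *)
From HB Require Import structures.
From mathcomp Require Import all_boot all_order all_algebra.
From mathcomp Require Import all_classical all_reals all_analysis.
Set Implicit Arguments. Unset Strict Implicit. Unset Printing Implicit Defensive.
Import Order.TTheory GRing.Theory Num.Theory.
Local Open Scope classical_set_scope.
Local Open Scope ring_scope.

Definition continuum_in {R : realType} {X : metricType R} (C : set X) : Prop :=
  [/\ C !=set0, compact C & connected C].

Definition diam {R : realType} {X : metricType R} (C : set X) : \bar R :=
  ereal_sup [set (mdist x y)%:E | x in C & y in C].

Definition hered_indecomposable {R : realType} {X : metricType R} : Prop :=
  forall C D : set X, continuum_in C -> continuum_in D ->
    C `&` D !=set0 -> C `<=` D \/ D `<=` C.

Definition partition_between {R : realType} {X : metricType R}
    (A B L : set X) : Prop :=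
  closed L /\
  exists U V : set X, [/\ open U, open V, U `&` V = set0 &
    [/\ ~` L = U `|` V, A `<=` U & B `<=` V]].

Definition essential_family {R : realType} {X : metricType R} {I : Type}
    (A B : I -> set X) : Prop :=
  forall L : I -> set X, (forall i, partition_between (A i) (B i) (L i)) ->
    (\bigcap_i L i) !=set0.

(* Main.v *)
Require Import Defs.
From HB Require Import structures.
From mathcomp Require Import all_boot all_order all_algebra.
From mathcomp Require Import all_classical all_reals all_analysis.
Import Order.TTheory GRing.Theory Num.Theory.
Local Open Scope classical_set_scope.
Local Open Scope ring_scope.

Lemma sep (R : realType) (X : metricType R) (A B : set X) :
  compact [set: X] -> closed A -> closed B -> A `&` B = set0 ->
  exists U V : set X, [/\ open U, open V, U `&` V = set0, A `<=` U & B `<=` V].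
Proof.
move=> cT cA cB AB.
have nX := compact_normal (@metric_hausdorff R X) cT.
have snB : set_nbhs A (~` B).
  apply/set_nbhsP; exists (~` B); split => //; first exact: closed_openC.
  by move=> x Ax Bx; have : (A `&` B) x by []; rewrite AB.
have [W /set_nbhsP [C [oC AC CW]] clW] := nX A cA _ snB.
exists C, (~` closure W); split => //.
- exact/closed_openC/closed_closure.
- apply/seteqP; split => // x [Cx]; apply.
  by apply: subset_closure; exact: CW.
- by move=> x Bx /clW.
Qed.

Lemma part_exists (R : realType) (X : metricType R) (A B : set X) :
  compact [set: X] -> closed A -> closed B -> A `&` B = set0 ->
  exists L, partition_between A B L.
Proof.
move=> cT cA cB AB; have [U [V [oU oV UV AU BV]]] := @sep R X A B cT cA cB AB.
exists (~` (U `|` V)); split; first by apply: open_closedC; exact: openU.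
by exists U, V; split => //; rewrite setCK.
Qed.
Lemma fip (T : topologicalType) (K : set (set T)) (Y : set T) :
  compact [set: T] -> closed Y -> (forall C, K C -> closed C) -> K !=set0 ->
  (forall C D, K C -> K D -> K (C `&` D)) -> (forall C, K C -> C `&` Y !=set0) ->
  (\bigcap_(C in K) C) `&` Y !=set0.
Proof.
move=> cT cY cK [C0 KC0] KI KY.
pose F := filter_from K (fun C => C `&` Y).
have FF : Filter F.
  apply: filter_from_filter; first by exists C0.
  move=> i j Ki Kj; exists (i `&` j); first exact: KI.
  by move=> x [[? ?] ?].
have PF : ProperFilter F by apply: filter_from_proper => // i /KY.
have [p [_ clp]] := cT F PF (filterT).
rewrite clusterE in clp.
have Hp : forall C, K C -> (C `&` Y) p.
  move=> C KC; have FC : F (C `&` Y) by exists C.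
  have := clp (C `&` Y) FC.
  by rewrite -(closure_id _).1 //; apply: closedI => //; exact: cK.
exists p; split; last by have [] := Hp _ KC0.
by move=> C KC; have [] := Hp _ KC.
Qed.

Definition rclopen {T : topologicalType} (L C : set T) :=
  [/\ C `<=` L, closed C & closed (L `\` C)].

Lemma rclopenI {T : topologicalType} (L C D : set T) :
  rclopen L C -> rclopen L D -> rclopen L (C `&` D).
Proof.
move=> [CL cC cLC] [DL cD cLD]; split.
- by move=> x [/CL].
- exact: closedI.
- have -> : L `\` (C `&` D) = (L `\` C) `|` (L `\` D).
    by rewrite setDIr.
  exact: closedU.
Qed.

Lemma rclopenU {T : topologicalType} (L C D : set T) :
  rclopen L C -> rclopen L D -> rclopen L (C `|` D).
Proof.
move=> [CL cC cLC] [DL cD cLD]; split.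
- by move=> x [/CL|/DL].
- exact: closedU.
- have -> : L `\` (C `|` D) = (L `\` C) `&` (L `\` D).
    by rewrite setDUr.
  exact: closedI.
Qed.

Lemma rclopenT {T : topologicalType} (L : set T) : closed L -> rclopen L L.
Proof. by move=> cL; split => //; rewrite setDv; exact: closed0. Qed.

Lemma rclopen0 {T : topologicalType} (L : set T) : closed L -> rclopen L set0.
Proof. by move=> cL; split => //; [exact: closed0|rewrite setD0]. Qed.

Lemma fip_neg (T : topologicalType) (K : set (set T)) (Y : set T) :
  compact [set: T] -> closed Y -> (forall C, K C -> closed C) -> K !=set0 ->
  (forall C D, K C -> K D -> K (C `&` D)) ->
  (\bigcap_(C in K) C) `&` Y = set0 -> exists C, K C /\ C `&` Y = set0.
Proof.
move=> cT cY cK K0 KI KY; apply: contrapT => H.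
have : (\bigcap_(C in K) C) `&` Y !=set0.
  apply: fip => // C KC; apply/set0P/eqP => CY; apply: H; by exists C.
by rewrite KY => -[].
Qed.

Lemma quasi (R : realType) (X : metricType R) (L : set X) (x : X) :
  compact [set: X] -> closed L -> L x ->
  \bigcap_(C in [set C | rclopen L C /\ C x]) C `<=` connected_component L x.
Proof.
move=> cT cL Lx.
set K := [set C | rclopen L C /\ C x].
set Q := \bigcap_(C in K) C.
have KL : K L by split => //; exact: rclopenT.
have cQ : closed Q by apply: closed_bigI => C [[]].
have Qx : Q x by move=> C [].
have QL : Q `<=` L by move=> y; apply.
have key : forall P1 P2 : set X, closed P1 -> closed P2 -> P1 `&` P2 = set0 ->
    Q = P1 `|` P2 -> P1 x -> P2 !=set0 -> False.
  move=> P1 P2 c1 c2 P12 QP P1x [y P2y].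
  have [U1 [U2 [oU1 oU2 U12 PU1 PU2]]] := @sep R X P1 P2 cT c1 c2 P12.
  have [C [[[CL cC cLC] Cx] CY]] : exists C, K C /\ C `&` ~` (U1 `|` U2) = set0.
    apply: fip_neg => //.
    - by apply: open_closedC; exact: openU.
    - by move=> C [[]].
    - by exists L.
    - by move=> C D [KC Cx] [KD Dx]; split; [exact: rclopenI|].
    - apply/seteqP; split => // z [Qz]; apply.
      by have : Q z := Qz; rewrite QP => -[/PU1|/PU2]; [left|right].
  have CU : C `<=` U1 `|` U2.
    move=> z Cz; apply: contrapT => nz.
    by have : (C `&` ~` (U1 `|` U2)) z by []; rewrite CY.
  have KC' : K (C `&` U1).
    split; last by split => //; exact: PU1.
    split.
    - by move=> z [/CL].
    - have -> : C `&` U1 = C `&` ~` U2.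
        apply/seteqP; split => z [Cz Uz]; split => //.
          by move=> U2z; have : (U1 `&` U2) z by []; rewrite U12.
        by case: (CU _ Cz).
      by apply: closedI => //; exact: open_closedC.
    - have -> : L `\` (C `&` U1) = (L `\` C) `|` (C `&` ~` U1).
        apply/seteqP; split => z.
          move=> [Lz nz]; have [Cz|nCz] := pselect (C z).
            by right; split => // U1z; apply: nz.
          by left.
        case => [[Lz nCz]|[Cz nU1z]]; first by split => // -[].
        by split; [exact: CL| case].
      by apply: closedU => //; apply: closedI => //; exact: open_closedC.
  have Qy : Q y by rewrite QP; right.
  have [_ U1y] := Qy _ KC'.
  have : (U1 `&` U2) y by split => //; exact: PU2.
  by rewrite U12.
apply: connected_component_max => //.
apply/connectedP => E [E0 QE sepE].
have cE : forall b, closed (E b).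
  have Eb : forall b, closure (E b) `&` E (~~ b) = set0.
    by case; case: sepE => ? ?; [rewrite setIC|].
  move=> b; rewrite closure_id; apply/seteqP; split; first exact: subset_closure.
  move=> z cz; have : Q z.
    rewrite (closure_id Q).1 //; apply: (closureS _ cz).
    by rewrite QE; case: b {cz Eb} => ? ?; [right|left].
  rewrite QE => -[] Ez; case: b cz Eb => // cz Eb.
    by have : (closure (E true) `&` E false) z by []; rewrite Eb.
  by have : (closure (E false) `&` E true) z by []; rewrite Eb.
have Ed : E false `&` E true = set0 by exact: separated_disjoint.
have : Q x := Qx; rewrite QE => -[Ex|Ex].
  by apply: (key (E false) (E true)) => //.
apply: (key (E true) (E false)) => //; first by rewrite setIC.
by rewrite setUC.
Qed.

Lemma comp_sep (R : realType) (X : metricType R) (L E F : set X) :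
  compact [set: X] -> closed L -> closed E -> closed F ->
  (forall C, connected C -> C `<=` L -> C `&` E !=set0 -> C `&` F !=set0 -> False) ->
  exists P, [/\ rclopen L P, E `&` L `<=` P & P `&` F = set0].
Proof.
move=> cT cL cE cF H.
have step2 : forall x, E x -> L x -> exists C, rclopen L C /\ C x /\ C `&` F = set0.
  move=> x Ex Lx.
  have [C [[rC Cx] CF]] : exists C, [set C | rclopen L C /\ C x] C /\ C `&` F = set0.
    apply: fip_neg => //.
    - by move=> C [[]].
    - by exists L; split => //; exact: rclopenT.
    - by move=> C D [KC Cx] [KD Dx]; split; [exact: rclopenI|].
    - apply/seteqP; split => // z [Qz Fz].
      have Kz := @quasi R X L x cT cL Lx z Qz.
      apply: (H (connected_component L x)).
      + exact: component_connected.
      + exact: connected_component_sub.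
      + by exists x; split => //; exact: connected_component_refl.
      + by exists z.
  by exists C.
pose K' := [set D | exists P, [/\ rclopen L P, P `&` F = set0 & D = L `\` P]].
have [D [[P [rP PF ->]] DY]] : exists D, K' D /\ D `&` (E `&` L) = set0.
  apply: fip_neg => //.
  - exact: closedI.
  - by move=> D [P [[_ _ ?] _ ->]].
  - exists L, set0; split; [exact: rclopen0|exact: set0I|by rewrite setD0].
  - move=> D1 D2 [P1 [r1 F1 ->]] [P2 [r2 F2 ->]]; exists (P1 `|` P2); split.
    + exact: rclopenU.
    + by rewrite setIUl F1 F2 setU0.
    + by rewrite setDUr.
  - apply/seteqP; split => // z [Kz [Ez Lz]].
    have [C [rC [Cz CF]]] := step2 z Ez Lz.
    have : K' (L `\` C) by exists C.
    by move/Kz => [].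
exists P; split => // z [Ez Lz]; apply: contrapT => nPz.
by have : ((L `\` P) `&` (E `&` L)) z by []; rewrite DY.
Qed.

Theorem lemma6p5 (R : realType) (X : metricType R)
  (A B : 'I_2 -> set X) (N : set (set X)) :
  compact [set: X] -> connected [set: X] -> [set: X] !=set0 ->
  @hered_indecomposable R X ->
  (forall i, closed (A i) /\ closed (B i) /\ A i `&` B i = set0) ->
  essential_family A B ->
  (forall i x y, A i x -> B i y -> 1 < mdist x y) ->
  finite_set N ->
  (forall S, N S -> closed S /\ (diam S <= (2^-1)%:E)%E) ->
  (forall S T, N S -> N T -> S <> T -> S `&` T = set0) ->
  exists C : set X, [/\ continuum_in C, (1%:E <= diam C)%E &
    forall S, N S -> C `&` S = set0].
Proof.
move=> cT cX X0 HI ABc ess dist1 finN NS Ndisj.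
pose i0 : 'I_2 := ord0; pose i1 : 'I_2 := ord_max.
have [cA0 [cB0 AB0]] := ABc i0; have [cA1 [cB1 AB1]] := ABc i1.
have dS : forall S a b, N S -> S a -> S b -> mdist a b <= 2^-1.
  move=> S a b NSS Sa Sb; have [_ dSS] := NS S NSS; rewrite -lee_fin.
  apply: le_trans dSS; apply: ereal_sup_ubound; exists a => //; exists b => //.
pose NA := [set S | N S /\ S `&` A i0 !=set0].
pose NB := [set S | N S /\ ~ (S `&` A i0 !=set0)].
pose A0' := A i0 `|` \bigcup_(S in NA) S.
pose B0' := B i0 `|` \bigcup_(S in NB) S.
have cA0' : closed A0'.
  apply: closedU => //; apply: closed_bigcup.
    by apply: sub_finite_set finN => S [].
  by move=> S [/NS []].
have cB0' : closed B0'.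
  apply: closedU => //; apply: closed_bigcup.
    by apply: sub_finite_set finN => S [].
  by move=> S [/NS []].
have AB0' : A0' `&` B0' = set0.
  apply/seteqP; split => // z [[A0z|[S [NSS SA] Sz]] [B0z|[S' [NS' SnA] S'z]]].
  - by have : (A i0 `&` B i0) z by []; rewrite AB0.
  - by apply: SnA; exists z.
  - case: SA => a [Sa Aa].
    have h1 := dist1 i0 a z Aa B0z; have h2 := dS S a z NSS Sa Sz.
    have H : (1:R) < 2^-1 := lt_le_trans h1 h2.
    have H2 : (2^-1 : R) <= 1 by rewrite invf_le1 // ler1n.
    by move: (lt_le_trans H H2); rewrite ltxx.
  - have SS' : S <> S' by move=> E; apply: SnA; rewrite -E.
    by have : (S `&` S') z by []; rewrite (Ndisj S S').
have [L0 [cL0 [U [V [oU oV UV [CL0 A0U B0V]]]]]] :=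
  @part_exists R X A0' B0' cT cA0' cB0' AB0'.
have L0N : forall S, N S -> L0 `&` S = set0.
  move=> S NSS; apply/seteqP; split => // z [L0z Sz].
  have : (~` L0) z.
    rewrite CL0; have [SA|SnA] := pselect (S `&` A i0 !=set0).
      by left; apply: A0U; right; exists S.
    by right; apply: B0V; right; exists S.
  by [].
have pL0 : partition_between (A i0) (B i0) L0.
  split => //; exists U, V; split => //; split => //.
    by move=> z Az; apply: A0U; left.
  by move=> z Bz; apply: B0V; left.
have [a [b [C [cC CL0' Ca Aa [Cb Bb]]]]] : exists a b C,
    [/\ connected C, C `<=` L0, C a, A i1 a & [/\ C b & B i1 b]].
  apply: contrapT => Hn.
  have [P [[PL cP cLP] AP PF]] := @comp_sep R X L0 (A i1) (B i1) cT cL0 cA1 cB1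
    (fun C cC CL Ca Cb => let: ex_intro a (conj Ca Aa) := Ca in
       let: ex_intro b (conj Cb Bb) := Cb in
       Hn (ex_intro _ a (ex_intro _ b (ex_intro _ C (And5 cC CL Ca Aa (conj Cb Bb)))))).
  have cA1' : closed (A i1 `|` P) by exact: closedU.
  have cB1' : closed (B i1 `|` (L0 `\` P)) by exact: closedU.
  have AB1' : (A i1 `|` P) `&` (B i1 `|` (L0 `\` P)) = set0.
    apply/seteqP; split => // z [[A1z|Pz] [B1z|[L0z nPz]]].
    - by have : (A i1 `&` B i1) z by []; rewrite AB1.
    - by apply: nPz; apply: AP.
    - by have : (P `&` B i1) z by []; rewrite PF.
    - by [].
  have [L1 [cL1 [U1 [V1 [oU1 oV1 U1V1 [CL1 AU1 BV1]]]]]] :=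
    @part_exists R X _ _ cT cA1' cB1' AB1'.
  pose Lf : 'I_2 -> set X := fun i => if i == i0 then L0 else L1.
  have pLf : forall i, partition_between (A i) (B i) (Lf i).
    move=> i; rewrite /Lf; case: eqP => [->//|ne].
    have -> : i = i1.
      apply/val_inj => /=; case: i ne => -[|[|m]] Hi //= ne.
      by exfalso; apply: ne; apply/val_inj.
    split => //; exists U1, V1; split => //; split => //.
      by move=> w Aw; apply: AU1; left.
    by move=> w Bw; apply: BV1; left.
  have [z Lz] := ess Lf pLf.
  have L0z : L0 z by have := Lz i0 I.
  have L1z : L1 z by have := Lz i1 I.
  have : (~` L1) z.
    rewrite CL1; have [Pz|nPz] := pselect (P z).
      by left; apply: AU1; right.
    by right; apply: BV1; right.
  by [].
exists (connected_component L0 a); split.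
- split.
  + by exists a; apply: connected_component_refl; exact: CL0'.
  + apply: (subclosed_compact _ cT) => //; exact: component_closed.
  + exact: component_connected.
- apply: (@le_trans _ _ (mdist a b)%:E).
    by rewrite lee_fin; apply/ltW; exact: (dist1 i1).
  apply: ereal_sup_ubound; exists a.
    by apply: connected_component_refl; exact: CL0'.
  exists b => //.
  exact: (connected_component_max Ca CL0' cC).
- move=> S NSS; apply/seteqP; split => // z [Kz Sz].
  have : (L0 `&` S) z by split => //; exact: connected_component_sub Kz.
  by rewrite L0N.
Qed.
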